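(* Let $f:\mathbb{R}^d\to\mathbb{R}$ be twice differentiable, $\mu$-strongly convex and $\alpha$-smooth ($0<\mu\le\alpha$), and suppose its Hessian is $\alpha$-Lipschitz, i.e. $\|\nabla^2f(u)-\nabla^2f(v)\|_2\le\alpha\|u-v\|$ for all $u,v$. Let $\kappa:=\alpha/\mu$ and $w_*:=\arg\min_w f(w)$. Let $(w_t)$ be generated by gradient descent with Polyak's momentum on $f$ with step size $\eta=1/\alpha$ and momentum parameter $\beta=(1-\tfrac{1}{2\sqrt\kappa})^2$, from initial points satisfying $$\left\|\begin{bmatrix}w_0-w_*\\ w_{-1}-w_*\end{bmatrix}\right\|\le\frac{1}{683\,\kappa^{3/2}}.$$ Then for every $t\ge0$, $$\left\|\begin{bmatrix}w_{t+1}-w_*\\ w_t-w_*\end{bmatrix}\right\|\le\Big(1-\frac{1}{4\sqrt\kappa}\Big)^{t+1}8\sqrt\kappa\left\|\begin{bmatrix}w_0-w_*\\ w_{-1}-w_*\end{bmatrix}\right\|.$$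
   Context: Gradient descent with Polyak's momentum (heavy ball): $w_{t+1}=w_t-\eta\nabla f(w_t)+\beta(w_t-w_{t-1})$ for $t\ge0$, given $w_0$ and $w_{-1}$ (in the algorithm $w_{-1}=w_0$). $\|\cdot\|_2$ is the spectral norm. *)

(* Defs.v *)
From HB Require Import structures.
From mathcomp Require Import all_boot all_order all_algebra.
From mathcomp Require Import all_classical all_reals all_analysis.
Set Implicit Arguments. Unset Strict Implicit. Unset Printing Implicit Defensive.
Import Order.TTheory GRing.Theory Num.Theory.
Import numFieldNormedType.Exports.
Local Open Scope ring_scope.
Local Open Scope classical_set_scope.

Definition dotv (R : realType) (n : nat) (u v : 'cV[R]_n) : R :=
  \sum_(i < n) u i 0 * v i 0.
Definition enorm (R : realType) (n : nat) (v : 'cV[R]_n) : R :=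
  Num.sqrt (dotv v v).

Definition specnorm (R : realType) (n : nat) (A : 'M[R]_n) : R :=
  sup [set enorm (A *m x) | x in [set x : 'cV[R]_n | enorm x <= 1]].

Definition is_gradient (R : realType) (n : nat) (f : 'cV[R]_n -> R)
  (grad : 'cV[R]_n -> 'cV[R]_n) : Prop :=
  forall x, differentiable f x /\ forall h, 'd f x h = dotv (grad x) h.

Definition is_hessian (R : realType) (n : nat) (grad : 'cV[R]_n -> 'cV[R]_n)
  (hess : 'cV[R]_n -> 'M[R]_n) : Prop :=
  forall x, differentiable grad x /\ forall h, 'd grad x h = hess x *m h.

Definition strongly_convex (R : realType) (n : nat) (mu : R) (f : 'cV[R]_n -> R)
  (grad : 'cV[R]_n -> 'cV[R]_n) : Prop :=
  forall x y, f x + dotv (grad x) (y - x) + mu / 2 * enorm (y - x) ^+ 2 <= f y.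

Definition smooth (R : realType) (n : nat) (alpha : R)
  (grad : 'cV[R]_n -> 'cV[R]_n) : Prop :=
  forall x y, enorm (grad x - grad y) <= alpha * enorm (x - y).

Definition prev (R : realType) (n : nat) (wm1 : 'cV[R]_n) (w : nat -> 'cV[R]_n)
  (t : nat) : 'cV[R]_n :=
  if t is t'.+1 then w t' else wm1.

Definition heavy_ball (R : realType) (n : nat) (grad : 'cV[R]_n -> 'cV[R]_n)
  (eta beta : R) (wm1 : 'cV[R]_n) (w : nat -> 'cV[R]_n) : Prop :=
  forall t, w t.+1 = w t - eta *: grad (w t) + beta *: (w t - prev wm1 w t).

(* Main.v *)
Require Import Defs.
From HB Require Import structures.
From mathcomp Require Import all_boot all_order all_algebra.
From mathcomp Require Import all_classical all_reals all_analysis.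
From mathcomp Require Import ring lra.
Import Order.TTheory GRing.Theory Num.Theory.
Import numFieldNormedType.Exports.
Set Implicit Arguments. Unset Strict Implicit. Unset Printing Implicit Defensive.
Local Open Scope ring_scope.


Section Dot.
Variable R : realType.

Lemma quad_cs (A B C : R) : 0 <= C -> (forall t, 0 <= A + 2 * t * B + t ^+ 2 * C) ->
  B ^+ 2 <= A * C.
Proof.
move=> C0 H.
have A0 : 0 <= A by have := H 0; rewrite !(mul0r,mulr0,expr0n,addr0) /=.
have [Cp|] := ltrP 0 C.
  have := H (- B / C).
  have -> : A + 2 * (- B / C) * B + (- B / C) ^+ 2 * C = (A * C - B ^+ 2) / C.
    by field; rewrite gt_eqF.
  by rewrite pmulr_lge0 ?invr_gt0 // subr_ge0.
move=> Cle; have C00 : C = 0 by apply/le_anti; rewrite Cle C0.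
rewrite C00 mulr0.
have [B0|BN0] := eqVneq B 0; first by rewrite B0 expr0n.
have := H (- (A + 1) / (2 * B)).
have -> : A + 2 * (- (A + 1) / (2 * B)) * B + (- (A + 1) / (2 * B)) ^+ 2 * C = -1.
  by rewrite C00 mulr0 addr0; field.
by rewrite ler0N1.
Qed.

Variable n : nat.
Implicit Types u v w : 'cV[R]_n.

Lemma dotvC u v : dotv u v = dotv v u.
Proof. by apply: eq_bigr => i _; rewrite mulrC. Qed.

Lemma dotvDl u v w : dotv (u + v) w = dotv u w + dotv v w.
Proof. by rewrite /dotv -big_split; apply: eq_bigr => i _; rewrite mxE mulrDl. Qed.

Lemma dotvZl a u v : dotv (a *: u) v = a * dotv u v.
Proof. by rewrite /dotv mulr_sumr; apply: eq_bigr => i _; rewrite mxE mulrA. Qed.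

Lemma dotvNl u v : dotv (- u) v = - dotv u v.
Proof. by rewrite -scaleN1r dotvZl mulN1r. Qed.

Lemma dotvBl u v w : dotv (u - v) w = dotv u w - dotv v w.
Proof. by rewrite dotvDl dotvNl. Qed.

Lemma dotvDr u v w : dotv w (u + v) = dotv w u + dotv w v.
Proof. by rewrite !(dotvC w) dotvDl. Qed.

Lemma dotvZr a u v : dotv v (a *: u) = a * dotv v u.
Proof. by rewrite !(dotvC v) dotvZl. Qed.

Lemma dotvNr u v : dotv v (- u) = - dotv v u.
Proof. by rewrite !(dotvC v) dotvNl. Qed.

Lemma dotvBr u v w : dotv w (u - v) = dotv w u - dotv w v.
Proof. by rewrite dotvDr dotvNr. Qed.

Lemma dotv0l v : dotv 0 v = 0.
Proof. by rewrite -(scale0r 0) dotvZl mul0r. Qed.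

Lemma dotv0r v : dotv v 0 = 0.
Proof. by rewrite dotvC dotv0l. Qed.

Lemma dotvv_ge0 u : 0 <= dotv u u.
Proof. by apply: sumr_ge0 => i _; rewrite -expr2 sqr_ge0. Qed.

Lemma enorm_sq u : enorm u ^+ 2 = dotv u u.
Proof. by rewrite /enorm sqr_sqrtr // dotvv_ge0. Qed.

Lemma enorm_ge0 u : 0 <= enorm u.
Proof. exact: sqrtr_ge0. Qed.

Lemma dotv_cs u v : dotv u v ^+ 2 <= dotv u u * dotv v v.
Proof.
apply: quad_cs; first exact: dotvv_ge0.
move=> t; have := dotvv_ge0 (u + t *: v).
rewrite !(dotvDl, dotvDr, dotvZl, dotvZr) (dotvC v u).
by move=> h; apply: le_trans h _; rewrite le_eqVlt; apply/orP; left; apply/eqP; ring.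
Qed.

Lemma dotv_le u v : `|dotv u v| <= enorm u * enorm v.
Proof.
rewrite -ler_sqr ?nnegrE ?mulr_ge0 ?enorm_ge0 //.
by rewrite real_normK ?num_real // exprMn !enorm_sq dotv_cs.
Qed.

Lemma dotv_le' u v : dotv u v <= enorm u * enorm v.
Proof. exact: le_trans (ler_norm _) (dotv_le _ _). Qed.

Lemma enormZ a u : enorm (a *: u) = `|a| * enorm u.
Proof.
rewrite /enorm dotvZl dotvZr mulrA -expr2 -real_normK ?num_real //.
by rewrite sqrtrM ?sqr_ge0 // sqrtr_sqr normr_id.
Qed.

Lemma enormD u v : enorm (u + v) <= enorm u + enorm v.
Proof.
rewrite -ler_sqr ?nnegrE ?addr_ge0 ?enorm_ge0 //.
rewrite enorm_sq sqrrD !enorm_sq !(dotvDl, dotvDr) (dotvC v u).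
have := dotv_le' u v; lra.
Qed.

Lemma enorm0 : enorm (0 : 'cV[R]_n) = 0.
Proof. by rewrite /enorm dotv0l sqrtr0. Qed.

Lemma enormN u : enorm (- u) = enorm u.
Proof. by rewrite -scaleN1r enormZ normrN1 mul1r. Qed.

End Dot.

Lemma dotv_col (R : realType) n (u v u' v' : 'cV[R]_n) :
  dotv (col_mx u v) (col_mx u' v') = dotv u u' + dotv v v'.
Proof.
by rewrite /dotv big_split_ord /=; congr (_ + _); apply: eq_bigr => i _;
  rewrite ?col_mxEu ?col_mxEd.
Qed.

Lemma enorm_col (R : realType) n (u v : 'cV[R]_n) :
  enorm (col_mx u v) ^+ 2 = enorm u ^+ 2 + enorm v ^+ 2.
Proof. by rewrite !enorm_sq dotv_col. Qed.


Section Spec.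
Local Open Scope classical_set_scope.
Variable R : realType.
Variable n : nat.
Implicit Types u v x y : 'cV[R]_n.

Lemma coord_le x i : `|x i 0| <= enorm x.
Proof.
rewrite -ler_sqr ?nnegrE ?enorm_ge0 // enorm_sq /dotv (bigD1 i) //= real_normK ?num_real //.
rewrite expr2 lerDl; apply: sumr_ge0 => j _; by rewrite -expr2 sqr_ge0.
Qed.

Lemma enorm_le_sum y : enorm y <= \sum_i `|y i 0|.
Proof.
rewrite -ler_sqr ?nnegrE ?enorm_ge0 ?sumr_ge0 // enorm_sq expr2 /dotv mulr_suml.
apply: ler_sum => i _.
apply: le_trans (ler_norm _) _; rewrite normrM ler_wpM2l ?normr_ge0 //.
by rewrite (bigD1 i) //= lerDl sumr_ge0.
Qed.

Lemma specnorm_le (A : 'M[R]_n) x : enorm (A *m x) <= specnorm A * enorm x.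
Proof.
set E := [set enorm (A *m x) | x in [set x : 'cV[R]_n | enorm x <= 1]].
have hs : has_sup E.
  split; first by exists (enorm (A *m 0)); exists 0 => //=; rewrite enorm0.
  exists (\sum_i \sum_j `|A i j|) => _ [y /= y1 <-].
  apply: le_trans (enorm_le_sum _) _; apply: ler_sum => i _.
  rewrite mxE; apply: le_trans (ler_norm_sum _ _ _) _; apply: ler_sum => j _.
  rewrite normrM ler_piMr ?normr_ge0 //; exact: le_trans (coord_le _ _) y1.
have ub := sup_upper_bound hs.
have sp0 : 0 <= specnorm A.
  apply: le_trans (ub (enorm (A *m 0)) _); first exact: enorm_ge0.
  by exists 0 => //=; rewrite enorm0.
have [x0|xn0] := eqVneq (enorm x) 0.
  have -> : x = 0.
    apply/matrixP => i j; rewrite ord1 mxE; apply/eqP; rewrite -normr_eq0.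
    by apply/eqP/le_anti; rewrite normr_ge0 andbT -x0 coord_le.
  by rewrite mulmx0 enorm0 mulr0.
have xp : 0 < enorm x by rewrite lt_def xn0 enorm_ge0.
rewrite -ler_pdivrMr //.
have -> : enorm (A *m x) / enorm x = enorm (A *m ((enorm x)^-1 *: x)).
  by rewrite -scalemxAr enormZ ger0_norm ?invr_ge0 ?enorm_ge0 // mulrC.
apply: ub; exists ((enorm x)^-1 *: x) => //=.
by rewrite enormZ ger0_norm ?invr_ge0 ?enorm_ge0 // mulVf.
Qed.

End Spec.


Section Der.
Variable R : realType.
Variable n : nat.

Lemma der_line (W : normedModType R) (G : 'cV[R]_n -> W) p q (t : R) :
  derivable G (p + t *: q) q ->
  is_derive t 1 (fun s => G (p + s *: q)) ('D_q G (p + t *: q)).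
Proof.
have E : (fun h : R => h^-1 *: (((fun s => G (p + s *: q)) \o shift t) (h *: 1)
            - G (p + t *: q))) =
         (fun h : R => h^-1 *: ((G \o shift (p + t *: q)) (h *: q) - G (p + t *: q))).
  apply/funext => h /=; rewrite /shift /=.
  by rewrite [h *: 1]mulr1 scalerDl addrCA.
move=> dG; split; first by rewrite /derivable E.
by rewrite /derive E.
Qed.

Lemma is_derive_coord (M : R -> 'cV[R]_n) (t : R) (dM : 'cV[R]_n) (i : 'I_n) :
  is_derive t 1 M dM -> is_derive t 1 (fun s => M s i 0) (dM i 0).
Proof.
move=> dMt; have dv : derivable M t 1 by case: dMt.
split.
  exact: ((derivable_mxP M t 1).1 dv i 0).
have := derive_mx dv; rewrite derive_val => ->; by rewrite mxE.
Qed.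

Lemma is_derive_dotv (M : R -> 'cV[R]_n) (t : R) (dM k : 'cV[R]_n) :
  is_derive t 1 M dM -> is_derive t 1 (fun s => dotv (M s) k) (dotv dM k).
Proof.
move=> dMt.
have -> : (fun s => dotv (M s) k) = \sum_(i < n) (fun s => k i 0 *: M s i 0).
  rewrite fct_sumE; apply/funext => s; rewrite /dotv.
  by apply: eq_bigr => i _; rewrite /GRing.scale /= mulrC.
rewrite /dotv.
have -> : \sum_(i < n) dM i 0 * k i 0 = \sum_(i < n) k i 0 *: dM i 0.
  by apply: eq_bigr => i _; rewrite /GRing.scale /= mulrC.
apply: is_derive_sum => i.
have h := is_deriveZ (k i 0) (@is_derive_coord M t dM i dMt).
exact: h.
Qed.

Lemma deriv_f (f : 'cV[R]_n -> R) grad p q (t : R) : is_gradient f grad ->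
  is_derive t 1 (fun s => f (p + s *: q)) (dotv (grad (p + t *: q)) q).
Proof.
move=> hg; have [df dfE] := hg (p + t *: q).
rewrite -dfE -deriveE //; apply: der_line; exact: diff_derivable.
Qed.

Lemma deriv_g (grad : 'cV[R]_n -> 'cV[R]_n) hess p q (t : R) k : is_hessian grad hess ->
  is_derive t 1 (fun s => dotv (grad (p + s *: q)) k) (dotv (hess (p + t *: q) *m q) k).
Proof.
move=> hh; have [dg dgE] := hh (p + t *: q).
apply: (@is_derive_dotv (fun s => grad (p + s *: q))).
rewrite -dgE -deriveE //; apply: der_line; exact: diff_derivable.
Qed.

End Der.


Lemma mvt_all (R : realType) (phi dphi : R -> R) (a b : R) : a < b ->
  (forall x : R, is_derive x 1 phi (dphi x)) ->
  exists2 c, c \in `]a, b[%R & phi b - phi a = dphi c * (b - a).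
Proof.
move=> ab hd; apply: MVT => //.
by apply: derivable_within_continuous => x _; case: (hd x).
Qed.

Lemma lim_le (R : realType) (a b x : R) : 0 <= b ->
  (forall t, 0 < t -> a - t * b <= x) -> a <= x.
Proof.
move=> b0 h; rewrite leNgt; apply/negP => xa.
have tp : 0 < (a - x) / (b + 1) by rewrite divr_gt0 // ?subr_gt0 // ltr_wpDl.
have := h _ tp; apply/negP; rewrite -ltNge.
have -> : a - (a - x) / (b + 1) * b = x + (a - x) / (b + 1).
  by field; rewrite gt_eqF // ltr_wpDl.
by rewrite ltrDl.
Qed.

Lemma dotvv_eq0 (R : realType) n (v : 'cV[R]_n) : dotv v v = 0 -> v = 0.
Proof.
move=> h; apply/matrixP => i j; rewrite ord1 mxE; apply/eqP; rewrite -normr_eq0.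
apply/eqP/le_anti; rewrite normr_ge0 andbT.
by apply: le_trans (coord_le _ _) _; rewrite /enorm h sqrtr0.
Qed.

Lemma qlo (R : realFieldType) (s U V : R) : 0 < s -> s <= 1/2 -> 0 <= U -> 0 <= V ->
  s^+2/4 * (U^+2 + V^+2) <= U^+2 - (1 + (1-s)^+2 - 4 * s^+2) * U * V + (1-s)^+2 * V^+2.
Proof.
move=> s0 s1 U0 V0.
set b := 1 + (1-s)^+2 - 4 * s^+2; set c := s^+2/4.
have c1 : 0 < 1 - c by rewrite /c; nra.
have D : 0 <= 4 * (1 - c) * ((1-s)^+2 - c) - b ^+ 2.
  have -> : 4 * (1 - c) * ((1-s)^+2 - c) - b ^+ 2 = s^+2 * (10 - 10 * s - 39/4 * s^+2).
    by rewrite /b /c; field.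
  apply: mulr_ge0; first exact: sqr_ge0.
  nra.
have key : 4 * (1 - c) * (U^+2 - b * U * V + (1-s)^+2 * V^+2 - c * (U^+2 + V^+2)) =
  (2 * (1 - c) * U - b * V) ^+ 2 + (4 * (1 - c) * ((1-s)^+2 - c) - b ^+ 2) * V ^+ 2.
  by ring.
have : 0 <= 4 * (1 - c) * (U^+2 - b * U * V + (1-s)^+2 * V^+2 - c * (U^+2 + V^+2)).
  by rewrite key addr_ge0 ?sqr_ge0 ?mulr_ge0 ?sqr_ge0.
rewrite pmulr_rge0 ?mulr_gt0 //; lra.
Qed.

Lemma step_scalar (R : rcfType) (s X P cr : R) : 0 < s -> s <= 1/2 -> 0 <= X ->
  X <= s^+6/64 -> 0 <= P -> P * s^+2 <= 4 * X -> cr^+2 <= 4 * ((1-s)^+2 * X) * P^+2 ->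
  (1-s)^+2 * X + cr + P^+2 <= (1 - s/2)^+2 * X.
Proof.
move=> s0 s1 X0 Xs P0 PX cr2.
set m := Num.sqrt X.
have m0 : 0 <= m := sqrtr_ge0 _.
have mX : X = m ^+ 2 by rewrite sqr_sqrtr.
rewrite mX in Xs PX cr2 *.
have ms : m <= s^+3/8.
  have ms' : 0 <= s^+3/8 by apply: divr_ge0 => //; apply: exprn_ge0; apply: ltW.
  rewrite -ler_sqr ?nnegrE //; apply: le_trans Xs _.
  by rewrite le_eqVlt; apply/orP; left; apply/eqP; field.
have Pm : P <= m * s / 2.
  have : P * s^+2 <= (m * s / 2) * s ^+2 by apply: le_trans PX _; nra.
  by rewrite ler_pM2r ?exprn_gt0.
have crb : cr <= 2 * (1 - s) * m * P.
  have h0 : 0 <= 2 * (1 - s) * m * P by rewrite !mulr_ge0 //; lra.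
  rewrite leNgt; apply/negP => h.
  have : (2 * (1 - s) * m * P) ^+ 2 < cr ^+ 2.
    by rewrite ltr_pXn2r ?nnegrE //; apply: le_trans h0 (ltW h).
  have -> : (2 * (1 - s) * m * P) ^+ 2 = 4 * ((1-s)^+2 * m^+2) * P^+2 by ring.
  by rewrite ltNge cr2.
have : (1 - s) * m + P <= (1 - s/2) * m by nra.
move=> h1.
have h2 : 0 <= (1 - s) * m + P by nra.
have : ((1 - s) * m + P) ^+ 2 <= ((1 - s/2) * m) ^+ 2.
  by rewrite ler_sqr ?nnegrE //; apply: le_trans h2 h1.
nra.
Qed.

Section Main.
Variable R : realType.
Variable n : nat.
Variables (f : 'cV[R]_n -> R) (grad : 'cV[R]_n -> 'cV[R]_n) (hess : 'cV[R]_n -> 'M[R]_n).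
Variables (mu alpha : R) (wstar : 'cV[R]_n).
Hypothesis mu0 : 0 < mu.
Hypothesis mual : mu <= alpha.
Hypothesis hg : is_gradient f grad.
Hypothesis hh : is_hessian grad hess.
Hypothesis hsc : strongly_convex mu f grad.
Hypothesis hsm : smooth alpha grad.
Hypothesis hlip : forall u v, specnorm (hess u - hess v) <= alpha * enorm (u - v).
Hypothesis hmin : forall v, f wstar <= f v.

Lemma al0 : 0 < alpha.
Proof. exact: lt_le_trans mu0 mual. Qed.

Lemma taylor p q :
  enorm (grad (p + q) - grad p - hess p *m q) <= alpha * enorm q ^+ 2.
Proof.
set e := grad (p + q) - grad p - hess p *m q.
pose psi s := dotv (grad (p + s *: q)) e - s * dotv (hess p *m q) e.
pose dpsi s := dotv (hess (p + s *: q) *m q) e - dotv (hess p *m q) e.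
have hd (x : R) : is_derive x 1 psi (dpsi x).
  have h1 := @deriv_g R n grad hess p q x e hh.
  have h2 : is_derive x 1 (fun s : R => s * dotv (hess p *m q) e) (dotv (hess p *m q) e).
    have h := @is_deriveZ R _ _ id (dotv (hess p *m q) e) x 1 1 (is_derive_id x 1).
    set c := dotv (hess p *m q) e in h *.
    have -> : (fun s : R => s * c) = c \*: id by apply/funext => s; rewrite /= mulrC.
    rewrite -[X in is_derive _ _ _ X]mulr1; exact: h.
  exact: (is_deriveB h1 h2).
have [c] := mvt_all ltr01 hd; rewrite in_itv /= => /andP [c0 c1] hc.
move: hc; rewrite /psi /dpsi subr0 mulr1 scale1r scale0r addr0 mul1r mul0r subr0.
have -> : dotv (grad (p + q)) e - dotv (hess p *m q) e - dotv (grad p) e = dotv e e.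
  by rewrite /e !dotvBl; ring.
rewrite -dotvBl -mulmxBl => hee.
have : enorm e ^+ 2 <= alpha * enorm q ^+ 2 * enorm e.
  rewrite enorm_sq hee; apply: le_trans (dotv_le' _ _) _.
  rewrite ler_wpM2r ?enorm_ge0 //; apply: le_trans (specnorm_le _ _) _.
  rewrite expr2 mulrA ler_wpM2r ?enorm_ge0 //; apply: le_trans (hlip _ _) _.
  rewrite addrC addKr enormZ; apply: ler_wpM2l; first exact: ltW al0.
  rewrite ger0_norm; last exact: ltW.
  by apply: ler_piMl; [exact: enorm_ge0|exact: ltW].
have [e0|en0] := eqVneq (enorm e) 0.
  by move=> _; rewrite e0 mulr_ge0 ?sqr_ge0 ?ltW ?al0.
have ep : 0 < enorm e by rewrite lt_def en0 enorm_ge0.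
by rewrite expr2 ler_pM2r.
Qed.


Lemma grad_star0 : grad wstar = 0.
Proof.
set g := grad wstar.
set s := 1 / (2 * alpha).
have s0 : 0 < s by rewrite divr_gt0 // mulr_gt0 // al0.
set x := wstar - s *: g.
have e1 : wstar - x = s *: g by rewrite /x opprB addrC subrK.
have e2 : x - wstar = - (s *: g) by rewrite /x addrC addKr.
have F1 := hsc x wstar; have F2 := hmin x.
rewrite e1 dotvZr in F1.
have F3 := dotv_le' (g - grad x) g.
have F4 := hsm wstar x; rewrite e1 enormZ ger0_norm ?(ltW s0) // -/g in F4.
rewrite dotvBl in F3.
have N0 : 0 <= enorm (s *: g) ^+ 2 := sqr_ge0 _.
have g0 : 0 <= enorm g := enorm_ge0 _.
have gg := enorm_sq g.
have : s * dotv (grad x) g <= 0.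
  have : 0 <= mu / 2 * enorm (s *: g) ^+ 2 by rewrite mulr_ge0 // divr_ge0 // ltW.
  lra.
move=> F5.
have F6 : dotv g g - alpha * (s * enorm g) * enorm g <= dotv (grad x) g.
  have := ler_wpM2r g0 F4; rewrite /= => F7.
  lra.
have as1 : alpha * s = 1 / 2 by rewrite /s; field; rewrite gt_eqF // al0.
have : s * (dotv g g / 2) <= 0.
  have : s * (dotv g g - alpha * (s * enorm g) * enorm g) <= s * dotv (grad x) g.
    by rewrite ler_wpM2l // ltW.
  rewrite -gg; have -> : alpha * (s * enorm g) * enorm g = (alpha * s) * enorm g ^+ 2 by ring.
  rewrite as1; lra.
rewrite pmulr_rle0 // => h.
apply: dotvv_eq0; apply/le_anti; rewrite dotvv_ge0 andbT; lra.
Qed.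

Lemma mono x y : mu * enorm (y - x) ^+ 2 <= dotv (grad y - grad x) (y - x).
Proof.
have h1 := hsc x y; have h2 := hsc y x.
rewrite -opprB enormN dotvNr in h2.
rewrite dotvBl; lra.
Qed.

Lemma taylor_star q :
  enorm (grad (wstar + q) - hess wstar *m q) <= alpha * enorm q ^+ 2.
Proof. by have := taylor wstar q; rewrite grad_star0 subr0. Qed.

Lemma Hlow q : mu * dotv q q <= dotv (hess wstar *m q) q.
Proof.
apply: (@lim_le _ _ (alpha * enorm q ^+ 3)).
  by rewrite mulr_ge0 ?exprn_ge0 ?enorm_ge0 ?ltW ?al0.
move=> t t0.
set e := grad (wstar + t *: q) - hess wstar *m (t *: q).
have E1 := mono wstar (wstar + t *: q).
rewrite addrC addKr grad_star0 subr0 enormZ dotvZr in E1.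
have E2 : grad (wstar + t *: q) = e + t *: (hess wstar *m q) by rewrite /e scalemxAr subrK.
rewrite E2 dotvDl dotvZl in E1.
have E3 := dotv_le' e q.
have E4 := taylor_star (t *: q); rewrite -/e enormZ (ger0_norm (ltW t0)) in E4.
have nq := enorm_ge0 q; have ne := enorm_ge0 e.
have gq := enorm_sq q.
rewrite -gq.
set h := dotv (hess wstar *m q) q in E1 *.
set nn := enorm q in E1 E3 E4 nq gq *.
rewrite (ger0_norm (ltW t0)) in E1.
have E5 : dotv e q <= alpha * (t * nn) ^+ 2 * nn.
  apply: le_trans E3 _; exact: (ler_wpM2r nq E4).
have E6 : t * (mu * nn ^+ 2) <= t * (alpha * t * nn ^+ 3 + h).
  have : t * (t * (mu * nn ^+ 2)) <= t * (t * (alpha * t * nn ^+ 3 + h)).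
    have -> : t * (t * (mu * nn ^+ 2)) = mu * (t * nn) ^+ 2 by ring.
    apply: le_trans E1 _.
    have -> : t * (t * (alpha * t * nn ^+ 3 + h)) = t * (alpha * (t * nn) ^+ 2 * nn) + t * (t * h) by ring.
    rewrite mulrDr lerD2r; apply: ler_wpM2l; [exact: ltW|exact: E5].
  by rewrite ler_pM2l.
rewrite ler_pM2l // in E6; lra.
Qed.

Lemma Hup q : dotv (hess wstar *m q) q <= alpha * dotv q q.
Proof.
apply: (@lim_le _ _ (alpha * enorm q ^+ 3)).
  by rewrite mulr_ge0 ?exprn_ge0 ?enorm_ge0 ?ltW ?al0.
move=> t t0.
set e := grad (wstar + t *: q) - hess wstar *m (t *: q).
have E1 := hsm (wstar + t *: q) wstar.
rewrite [wstar + _]addrC addrK grad_star0 subr0 enormZ (ger0_norm (ltW t0)) in E1.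
have E2 : grad (wstar + t *: q) = e + t *: (hess wstar *m q) by rewrite /e scalemxAr subrK.
have E3 := dotv_le' (- e) q.
rewrite dotvNl enormN in E3.
have E3' := dotv_le' (grad (wstar + t *: q)) q.
rewrite E2 dotvDl dotvZl in E3'.
have E4 := taylor_star (t *: q); rewrite -/e enormZ (ger0_norm (ltW t0)) in E4.
have nq := enorm_ge0 q; have ne := enorm_ge0 e.
have gq := enorm_sq q.
rewrite -gq.
set h := dotv (hess wstar *m q) q in E3' *.
set nn := enorm q in E1 E3 E3' E4 nq gq *.
rewrite -E2 in E3'.
have E5 : - dotv e q <= alpha * (t * nn) ^+ 2 * nn.
  apply: le_trans E3 _; exact: (ler_wpM2r nq E4).
have E6 : enorm (grad (wstar + t *: q)) * nn <= alpha * (t * nn) * nn.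
  rewrite addrC; exact: (ler_wpM2r nq E1).
have E7 : t * h <= t * (alpha * nn ^+ 2 + t * (alpha * nn ^+ 3)).
  have -> : t * (alpha * nn ^+ 2 + t * (alpha * nn ^+ 3)) = alpha * (t * nn) * nn + alpha * (t * nn) ^+ 2 * nn by ring.
  lra.
rewrite ler_pM2l // in E7; lra.
Qed.

Definition Dq (h k : 'cV[R]_n) (s : R) := f ((wstar + s *: k) + s *: h) - f (wstar + s *: h)
  - f (wstar + s *: k) + f wstar.
Definition Kq (h k : 'cV[R]_n) := alpha * ((enorm k + enorm h) ^+ 2 + enorm h ^+ 2) * enorm h.

Lemma Dlem h k s : 0 < s ->
  `|Dq h k s - s ^+ 2 * dotv (hess wstar *m k) h| <= s ^+ 3 * Kq h k.
Proof.
move=> s0.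
pose phi t := f ((wstar + s *: k) + t *: h) - f (wstar + t *: h).
pose dphi t := dotv (grad ((wstar + s *: k) + t *: h)) h - dotv (grad (wstar + t *: h)) h.
have hd (x : R) : is_derive x 1 phi (dphi x).
  exact: (is_deriveB (deriv_f (wstar + s *: k) h x hg) (deriv_f wstar h x hg)).
have [c] := mvt_all s0 hd; rewrite in_itv /= => /andP [c0 c1] hD.
rewrite /phi /dphi !scale0r !addr0 subr0 -dotvBl in hD.
rewrite -[wstar + s *: k + c *: h]addrA in hD.
set E1 := grad (wstar + (s *: k + c *: h)) - hess wstar *m (s *: k + c *: h).
set E2 := grad (wstar + c *: h) - hess wstar *m (c *: h).
have eG : grad (wstar + (s *: k + c *: h)) - grad (wstar + c *: h) =
   E1 - E2 + s *: (hess wstar *m k).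
  rewrite /E1 /E2 mulmxDr !scalemxAr.
  by apply/matrixP => i j; rewrite !mxE; ring.
rewrite eG (dotvDl (E1 - E2)) (dotvBl E1 E2) dotvZl in hD.
have eD : Dq h k s - s ^+ 2 * dotv (hess wstar *m k) h = s * (dotv E1 h - dotv E2 h).
  rewrite /Dq; move: hD; lra.
rewrite eD normrM (ger0_norm (ltW s0)).
have nh := enorm_ge0 h; have nk := enorm_ge0 k.
have B1 : `|dotv E1 h| <= alpha * (s ^+ 2 * (enorm k + enorm h) ^+ 2) * enorm h.
  apply: le_trans (dotv_le _ _) _; apply: ler_wpM2r => //.
  apply: le_trans (taylor_star _) _; apply: ler_wpM2l; first exact: ltW al0.
  have t1 : enorm (s *: k + c *: h) <= s * enorm k + c * enorm h.
    apply: le_trans (enormD _ _) _.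
    by rewrite !enormZ (ger0_norm (ltW s0)) (ger0_norm (ltW c0)).
  have t2 : s * enorm k + c * enorm h <= s * (enorm k + enorm h).
    rewrite mulrDr lerD2l; apply: ler_wpM2r => //; exact: ltW.
  rewrite -exprMn; apply: lerXn2r; rewrite ?nnegrE ?enorm_ge0 ?mulr_ge0 ?addr_ge0 ?(ltW s0) //.
  exact: le_trans t1 t2.
have B2 : `|dotv E2 h| <= alpha * (s ^+ 2 * enorm h ^+ 2) * enorm h.
  apply: le_trans (dotv_le _ _) _; apply: ler_wpM2r => //.
  apply: le_trans (taylor_star _) _; apply: ler_wpM2l; first exact: ltW al0.
  rewrite enormZ (ger0_norm (ltW c0)) -exprMn; apply: lerXn2r;
    rewrite ?nnegrE ?enorm_ge0 ?mulr_ge0 ?(ltW s0) ?(ltW c0) //.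
  by apply: ler_wpM2r => //; exact: ltW.
have : `|dotv E1 h - dotv E2 h| <= s ^+ 2 * Kq h k.
  apply: le_trans (ler_normB _ _) _.
  have -> : s ^+ 2 * Kq h k = alpha * (s ^+ 2 * (enorm k + enorm h) ^+ 2) * enorm h
     + alpha * (s ^+ 2 * enorm h ^+ 2) * enorm h by rewrite /Kq; ring.
  exact: lerD.
move=> hB; have -> : s ^+ 3 * Kq h k = s * (s ^+ 2 * Kq h k) by ring.
by apply: ler_wpM2l => //; exact: ltW.
Qed.

Lemma Hsym h k : dotv (hess wstar *m h) k = dotv h (hess wstar *m k).
Proof.
have Kp x y : 0 <= Kq x y.
  by rewrite /Kq !mulr_ge0 ?addr_ge0 ?sqr_ge0 ?enorm_ge0 ?ltW ?al0.
set X1 := dotv (hess wstar *m h) k; set X2 := dotv h (hess wstar *m k).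
suff : `|X1 - X2| <= 0 by rewrite normr_le0 subr_eq0 => /eqP.
apply: (@lim_le _ _ (Kq k h + Kq h k)); first by rewrite addr_ge0.
move=> s s0.
have d1 := Dlem k h s0; have d2 := Dlem h k s0.
have eD : Dq k h s = Dq h k s.
  rewrite /Dq; have -> : wstar + s *: h + s *: k = wstar + s *: k + s *: h by rewrite addrAC.
  ring.
rewrite eD in d1.
rewrite /X2 dotvC.
have : s ^+ 2 * `|X1 - dotv (hess wstar *m k) h| <= s ^+ 2 * (s * (Kq k h + Kq h k)).
  rewrite -[X in X * `|_|]ger0_norm ?sqr_ge0 // -normrM mulrBr.
  have : `|(Dq h k s - s ^+ 2 * dotv (hess wstar *m k) h) - (Dq h k s - s ^+ 2 * X1)| <=
     s ^+ 3 * Kq h k + s ^+ 3 * Kq k h.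
    by apply: le_trans (ler_normB _ _) _; apply: lerD.
  have -> : s ^+ 2 * (s * (Kq k h + Kq h k)) = s ^+ 3 * Kq h k + s ^+ 3 * Kq k h by ring.
  have -> : (Dq h k s - s ^+ 2 * dotv (hess wstar *m k) h) - (Dq h k s - s ^+ 2 * X1) =
    s ^+ 2 * X1 - s ^+ 2 * dotv (hess wstar *m k) h by ring.
  by [].
rewrite ler_pM2l ?exprn_gt0 //; lra.
Qed.

Section Dyn.
Variable s : R.
Hypothesis s0 : 0 < s.
Hypothesis s1 : s <= 1/2.
Hypothesis hmu : mu = 4 * s ^+ 2 * alpha.

Let beta := (1 - s) ^+ 2.
Let eta := 1 / alpha.
Let b2 := 1 + (1 - s) ^+ 2 - 4 * s ^+ 2.
Let H := hess wstar.

Fact aop_key : unit. Proof. exact: tt. Qed.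
Definition aop (u : 'cV[R]_n) := locked_with aop_key ((1 + beta) *: u - eta *: (H *m u)).
Lemma aopE u : aop u = (1 + beta) *: u - eta *: (H *m u).
Proof. by rewrite /aop; case: aop_key. Qed.

Lemma aopD u v : aop (u + v) = aop u + aop v.
Proof. by apply/matrixP => i j; rewrite !aopE mulmxDr !mxE; ring. Qed.

Lemma aopZ a u : aop (a *: u) = a *: aop u.
Proof. by apply/matrixP => i j; rewrite !aopE -scalemxAr !mxE; ring. Qed.

Lemma aop_sym u v : dotv (aop u) v = dotv u (aop v).
Proof. by rewrite !aopE dotvBl dotvBr !dotvZl !dotvZr Hsym. Qed.

Lemma eta_al : eta * alpha = 1.
Proof. by rewrite /eta mul1r mulVf // gt_eqF // al0. Qed.

Lemma eta_mu : eta * mu = 4 * s ^+ 2.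
Proof. by rewrite hmu /eta; field; rewrite gt_eqF // al0. Qed.

Lemma eta0 : 0 < eta.
Proof. by rewrite /eta divr_gt0 // al0. Qed.

Lemma aop_lo u : beta * dotv u u <= dotv (aop u) u.
Proof.
rewrite aopE dotvBl !dotvZl.
have h := Hup u; have e0 := eta0.
have : eta * dotv (H *m u) u <= eta * (alpha * dotv u u) by rewrite ler_pM2l.
rewrite mulrA eta_al; lra.
Qed.

Lemma aop_hi u : dotv (aop u) u <= b2 * dotv u u.
Proof.
rewrite aopE dotvBl !dotvZl.
have h := Hlow u; have e0 := eta0.
have : eta * (mu * dotv u u) <= eta * dotv (H *m u) u by rewrite ler_pM2l.
rewrite mulrA eta_mu /b2 -/beta; lra.
Qed.

Lemma b2_ge0 : 0 <= b2.
Proof. have := s0; have := s1; rewrite /b2; nra. Qed.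

Lemma aop_cs u v : dotv (aop u) v ^+ 2 <= dotv (aop u) u * dotv (aop v) v.
Proof.
apply: quad_cs.
  apply: le_trans (aop_lo _); apply: mulr_ge0; [exact: sqr_ge0|exact: dotvv_ge0].
move=> t; have := aop_lo (u + t *: v).
have hb : 0 <= beta by exact: sqr_ge0.
have := dotvv_ge0 (u + t *: v).
rewrite aopD aopZ !(dotvDl, dotvDr, dotvZl, dotvZr) (aop_sym v u).
move=> h1 h2.
have := mulr_ge0 hb h1; rewrite (dotvC v u) in h2 *.
move=> h3; apply: le_trans (le_trans h3 h2) _.
by rewrite (dotvC v (aop u)) le_eqVlt; apply/orP; left; apply/eqP; ring.
Qed.

Lemma aop_abs u v : `|dotv (aop u) v| <= b2 * enorm u * enorm v.
Proof.
rewrite -ler_sqr ?nnegrE ?mulr_ge0 ?enorm_ge0 ?b2_ge0 //.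
rewrite real_normK ?num_real //; apply: le_trans (aop_cs u v) _.
have hb : 0 <= beta by exact: sqr_ge0.
have l1 := aop_lo u; have l2 := aop_lo v.
have a1 : 0 <= dotv (aop u) u by apply: le_trans l1; rewrite mulr_ge0 ?dotvv_ge0.
have a2 : 0 <= dotv (aop v) v by apply: le_trans l2; rewrite mulr_ge0 ?dotvv_ge0.
rewrite !exprMn !enorm_sq.
have -> : b2 ^+ 2 * dotv u u * dotv v v = (b2 * dotv u u) * (b2 * dotv v v) by ring.
by apply: ler_pM => //; apply: aop_hi.
Qed.

Definition Q u v := dotv u u - dotv (aop u) v + beta * dotv v v.

Lemma Qlo u v : s ^+ 2 / 4 * (dotv u u + dotv v v) <= Q u v.
Proof.
rewrite /Q -!enorm_sq.
have h := aop_abs u v.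
have := qlo s0 s1 (enorm_ge0 u) (enorm_ge0 v).
rewrite -/b2 -/beta => h2.
have : - (b2 * enorm u * enorm v) <= - dotv (aop u) v.
  by rewrite lerN2; apply: le_trans (ler_norm _) h.
lra.
Qed.

Lemma Q_ge0 u v : 0 <= Q u v.
Proof.
apply: le_trans (Qlo u v); apply: mulr_ge0; first by apply: divr_ge0 => //; exact: sqr_ge0.
by rewrite addr_ge0 ?dotvv_ge0.
Qed.

Lemma Qhi u v : Q u v <= 2 * (dotv u u + dotv v v).
Proof.
rewrite /Q.
have h := aop_abs u v.
have hb : beta <= 1 by have := s0; have := s1; rewrite /beta; nra.
have hb2 : b2 <= 2 by have := s0; have := s1; rewrite /b2; nra.
have nu := enorm_ge0 u; have nv := enorm_ge0 v.
have : - dotv (aop u) v <= 2 * enorm u * enorm v.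
  apply: le_trans (ler_norm (- dotv (aop u) v)) _; rewrite normrN; apply: le_trans h _.
  by rewrite -!mulrA ler_wpM2r ?mulr_ge0.
have : 2 * enorm u * enorm v <= enorm u ^+ 2 + enorm v ^+ 2.
  have := sqr_ge0 (enorm u - enorm v); rewrite sqrrB; lra.
rewrite !enorm_sq => h1 h2.
have : beta * dotv v v <= dotv v v.
  by rewrite ler_piMl ?dotvv_ge0.
lra.
Qed.

Lemma Qstep u v : Q (aop u - beta *: v) u = beta * Q u v.
Proof.
rewrite /Q aopD -scaleNr aopZ.
rewrite !(dotvDl, dotvDr, dotvZl, dotvZr).
rewrite (aop_sym (aop u) u) (aop_sym v u) (dotvC v (aop u)).
ring.
Qed.

Lemma Qpert u v r : Q (u + r) v =
  Q u v + (2 * dotv u r - dotv (aop r) v) + dotv r r.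
Proof.
rewrite /Q aopD !(dotvDl, dotvDr) (dotvC r u); ring.
Qed.

Lemma Qcross u v r :
  (2 * dotv u r - dotv (aop r) v) ^+ 2 <= 4 * Q u v * dotv r r.
Proof.
set cr := 2 * dotv u r - dotv (aop r) v.
have h : (cr / 2) ^+ 2 <= Q u v * dotv r r.
  apply: quad_cs; first exact: dotvv_ge0.
  move=> t; have := Q_ge0 (u + t *: r) v.
  rewrite Qpert aopZ dotvZr dotvZl dotvZl dotvZr.
  by move=> h; apply: le_trans h _; rewrite le_eqVlt; apply/orP; left; apply/eqP;
    rewrite /cr; field.
have -> : cr ^+ 2 = 4 * (cr / 2) ^+ 2 by field.
rewrite -mulrA; apply: ler_wpM2l => //.
Qed.


Variables (wm1 : 'cV[R]_n) (w : nat -> 'cV[R]_n).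
Hypothesis hball : heavy_ball grad (1 / alpha) ((1 - s) ^+ 2) wm1 w.

Let xu t := w t - wstar.
Let yv t := Defs.prev wm1 w t - wstar.
Let rr t := - (eta *: (grad (w t) - H *m xu t)).
Let Qt t := Q (xu t) (yv t).

Lemma dyn t : xu t.+1 = (aop (xu t) - beta *: yv t) + rr t.
Proof.
rewrite /xu /yv /rr hball aopE.
set M := H *m _; set G := grad _.
by apply/matrixP => i j; rewrite !mxE /eta /beta; ring.
Qed.

Lemma rr_bound t : enorm (rr t) <= dotv (xu t) (xu t).
Proof.
rewrite /rr enormN enormZ ger0_norm ?(ltW eta0) //.
have e : w t = wstar + xu t by rewrite /xu addrC subrK.
rewrite [in grad _]e.
have := taylor_star (xu t); rewrite -enorm_sq => h.
have e0 := eta0.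
apply: le_trans (ler_wpM2l (ltW e0) h) _.
by rewrite mulrA eta_al mul1r.
Qed.

Lemma Qt_step t : Qt t <= s ^+ 6 / 64 -> Qt t.+1 <= (1 - s / 2) ^+ 2 * Qt t.
Proof.
move=> hQ.
have eQ : Qt t.+1 = Q ((aop (xu t) - beta *: yv t) + rr t) (xu t) by rewrite /Qt dyn.
rewrite eQ Qpert Qstep -/(Qt t).
have hc := Qcross (aop (xu t) - beta *: yv t) (xu t) (rr t).
rewrite Qstep -/(Qt t) -enorm_sq in hc.
rewrite -enorm_sq.
apply: step_scalar => //.
- exact: Q_ge0.
- exact: enorm_ge0.
- apply: le_trans (ler_wpM2r (sqr_ge0 _) (rr_bound t)) _.
  have := Qlo (xu t) (yv t); rewrite -/(Qt t) => h.
  have := dotvv_ge0 (yv t); have := dotvv_ge0 (xu t).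
  have := s0; nra.
Qed.

Lemma rho2_ge0 : 0 <= (1 - s / 2) ^+ 2.
Proof. exact: sqr_ge0. Qed.

Lemma rho2_le1 : (1 - s / 2) ^+ 2 <= 1.
Proof. have := s0; have := s1; nra. Qed.

Lemma Qt_bound t : Qt 0 <= s ^+ 6 / 64 -> Qt t <= ((1 - s / 2) ^+ 2) ^+ t * Qt 0.
Proof.
move=> h0; elim: t => [|t IH]; first by rewrite expr0 mul1r.
have q0 : 0 <= Qt 0 by exact: Q_ge0.
have ht : Qt t <= s ^+ 6 / 64.
  apply: le_trans IH _; apply: le_trans h0.
  by apply: ler_piMl => //; apply: exprn_ile1; [exact: rho2_ge0|exact: rho2_le1].
apply: le_trans (Qt_step ht) _.
by rewrite [_ ^+ t.+1]exprS -mulrA; apply: ler_wpM2l => //; exact: rho2_ge0.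
Qed.

Lemma dyn_main t :
  enorm (col_mx (w 0%N - wstar) (wm1 - wstar)) ^+ 2 * 128 <= s ^+ 6 ->
  enorm (col_mx (w t.+1 - wstar) (w t - wstar)) ^+ 2 <=
    ((1 - s / 2) ^+ 2) ^+ t.+1 * (8 / s ^+ 2) *
      enorm (col_mx (w 0%N - wstar) (wm1 - wstar)) ^+ 2.
Proof.
move=> hz.
set Z := enorm (col_mx (w 0%N - wstar) (wm1 - wstar)) ^+ 2 in hz *.
have hZ : Z = dotv (xu 0) (xu 0) + dotv (yv 0) (yv 0) by rewrite /Z enorm_col !enorm_sq.
have Q0 : Qt 0 <= 2 * Z by rewrite hZ; exact: Qhi.
have Q0' : Qt 0 <= s ^+ 6 / 64 by apply: le_trans Q0 _; lra.
have hb := Qt_bound t.+1 Q0'.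
have hl := Qlo (xu t.+1) (yv t.+1); rewrite -/(Qt t.+1) in hl.
rewrite enorm_col !enorm_sq.
have -> : w t - wstar = yv t.+1 by [].
rewrite -/(xu t.+1).
set r := ((1 - s / 2) ^+ 2) ^+ t.+1.
have r0 : 0 <= r by apply: exprn_ge0; exact: rho2_ge0.
have s2 : 0 < s ^+ 2 by apply: exprn_gt0.
rewrite -(ler_pM2l (x := s ^+ 2 / 4)) ?divr_gt0 //.
apply: le_trans hl _; apply: le_trans hb _.
have -> : s ^+ 2 / 4 * (r * (8 / s ^+ 2) * Z) = r * (2 * Z) by field; rewrite gt_eqF.
by apply: ler_wpM2l.
Qed.

End Dyn.

End Main.


Theorem theorem8 (R : realType) (d : nat) (f : 'cV[R]_d -> R)
  (grad : 'cV[R]_d -> 'cV[R]_d) (hess : 'cV[R]_d -> 'M[R]_d)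
  (mu alpha : R) (wstar wm1 : 'cV[R]_d) (w : nat -> 'cV[R]_d) :
  0 < mu -> mu <= alpha ->
  is_gradient f grad -> is_hessian grad hess ->
  strongly_convex mu f grad -> smooth alpha grad ->
  (forall u v, specnorm (hess u - hess v) <= alpha * enorm (u - v)) ->
  (forall v, f wstar <= f v) ->
  let kappa := alpha / mu in
  heavy_ball grad (1 / alpha) ((1 - 1 / (2 * Num.sqrt kappa)) ^+ 2) wm1 w ->
  enorm (col_mx (w 0%N - wstar) (wm1 - wstar)) <= 1 / (683 * (kappa * Num.sqrt kappa)) ->
  forall t : nat,
    enorm (col_mx (w t.+1 - wstar) (w t - wstar)) <=
      (1 - 1 / (4 * Num.sqrt kappa)) ^+ t.+1 * (8 * Num.sqrt kappa) *
        enorm (col_mx (w 0%N - wstar) (wm1 - wstar)).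
Proof.
move=> mu0 mual hg hh hsc hsm hlip hmin kappa hball hz0 t.
have al0 : 0 < alpha by exact: lt_le_trans mu0 mual.
have k1 : 1 <= kappa by rewrite /kappa ler_pdivlMr // mul1r.
set sk := Num.sqrt kappa in hball hz0 *.
have sk2 : sk ^+ 2 = kappa by rewrite sqr_sqrtr // (le_trans ler01 k1).
have sk0 : 0 <= sk := sqrtr_ge0 _.
have sk1 : 1 <= sk by nra.
set s := 1 / (2 * sk) in hball.
have s0 : 0 < s by rewrite /s divr_gt0 //; lra.
have s1 : s <= 1 / 2.
  rewrite /s ler_pdivrMr; last lra.
  rewrite mulrA; have -> : 1 / 2 * 2 = 1 :> R by field.
  lra.
have ssk : s * sk = 1 / 2 by rewrite /s; field; rewrite gt_eqF //; lra.
have hmu : mu = 4 * s ^+ 2 * alpha.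
  have e : 4 * s ^+ 2 * kappa = 1.
    by rewrite -sk2 /s; field; rewrite gt_eqF //; lra.
  move: e; rewrite /kappa => e.
  have -> : 4 * s ^+ 2 * alpha = (4 * s ^+ 2 * (alpha / mu)) * mu by field; rewrite gt_eqF.
  by rewrite e mul1r.
set Z := enorm (col_mx (w 0%N - wstar) (wm1 - wstar)) in hz0 *.
have Z0 : 0 <= Z by exact: enorm_ge0.
have ks : kappa * sk = 1 / (8 * s ^+ 3).
  rewrite -sk2 /s; field; rewrite gt_eqF //; lra.
rewrite ks in hz0.
have hz0' : Z <= 8 * s ^+ 3 / 683.
  apply: le_trans hz0 _; rewrite le_eqVlt; apply/orP; left; apply/eqP; field.
  rewrite gt_eqF // exprn_gt0 //.
have hz : Z ^+ 2 * 128 <= s ^+ 6.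
  have y0 : 0 <= s ^+ 3 by apply: exprn_ge0; apply: ltW.
  have hy : Z <= s ^+ 3 / 64.
    apply: le_trans hz0' _; lra.
  have -> : s ^+ 6 = (s ^+ 3) ^+ 2 by rewrite -exprM.
  nra.
have key := dyn_main mu0 mual hg hh hsc hsm hlip hmin s0 s1 hmu hball t hz.
have e4 : 1 / (4 * sk) = s / 2 by rewrite /s; field; rewrite gt_eqF //; lra.
have e8 : 8 * sk = 4 / s by rewrite /s; field; rewrite gt_eqF //; lra.
rewrite e4 e8.
set rho := 1 - s / 2.
have rho0 : 0 <= rho by rewrite /rho; lra.
rewrite -ler_sqr ?nnegrE; last 2 first.
- exact: enorm_ge0.
- apply: mulr_ge0 => //; apply: mulr_ge0; [exact: exprn_ge0|apply: divr_ge0 => //; exact: ltW].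
apply: le_trans key _.
rewrite -/s -/rho -/Z.
set a := (rho ^+ 2) ^+ t.+1.
have ha : 0 <= a by apply: exprn_ge0; apply: sqr_ge0.
have hs : 0 <= 8 / s ^+ 2 by apply: divr_ge0 => //; apply: sqr_ge0.
have hz2 : 0 <= Z ^+ 2 := sqr_ge0 _.
have -> : (rho ^+ t.+1 * (4 / s) * Z) ^+ 2 = 2 * (a * (8 / s ^+ 2) * Z ^+ 2).
  rewrite /a -exprM mulnC exprM; set b := rho ^+ t.+1.
  by field; rewrite gt_eqF.
have : 0 <= a * (8 / s ^+ 2) * Z ^+ 2 by apply: mulr_ge0 => //; apply: mulr_ge0.
lra.
Qed.
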